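(* Fix an instance of Problem (P) and the blockers $b(i)$ ($1\le i\le n$) determined by running Algorithm 1 on it. Consider the modified algorithm obtained from Algorithm 1 by initializing $y_i=\mathrm{avg}(i,b(i))$ for each $i$ (before the while loop) and deleting the step ''$y_i\leftarrow\mathrm{avg}(i,i^* )$ for all $i_L<i<i^*$'' (so the $y_i$ are never updated). Then the modified algorithm produces the same output $x_1,\dots,x_n$ as Algorithm 1 on this instance.
   Context: Problem (P): given an integer $n\ge1$, reals $0<q_1\le\cdots\le q_n$, $z_1,\dots,z_n>0$ and $K>0$, maximize $\sum_{i=1}^n x_i$ subject to $0\le x_i\le q_i$ for all $i$, $0\le x_1\le\cdots\le x_n$, and $\sum_{i=1}^n z_ix_i\le K$. For $1\le i<j\le n+1$ let $\mathrm{sum}(i,j)=z_i+\cdots+z_{j-1}$ and $\mathrm{avg}(i,j)=\mathrm{sum}(i,j)/(j-i)$. Algorithm 1: Initialize $S=\{0,n+1\}$, $y_i=\mathrm{avg}(i,n+1)$ and $x_i=0$ for $i=1,\dots,n$, and $\hat B=K$. While $\hat B>0$ and $S\ne\{0,1,\dots,n+1\}$, perform an iteration: let $i^*$ be the index $i\in\{1,\dots,n\}\setminus S$ minimizing $y_i$, ties broken in favour of the smallest index; let $i_L=\max\{j\in S:j<i^*\}$ and $i_R=\min\{j\in S:j>i^*\}$; set $d=\min\{\hat B/((i_R-i^* )y_{i^*}),\ q_{i^*}-x_{i^*}\}$; set $\hat B\leftarrow\hat B-d(i_R-i^* )y_{i^*}$; set $x_i\leftarrow x_i+d$ for all $i^*\le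 i<i_R$; set $y_i\leftarrow\mathrm{avg}(i,i^* )$ for all $i_L<i<i^*$; add $i^*$ to $S$. When the loop ends, output $x_1,\dots,x_n$. Blocker: for $1\le i\le n$, $b(i)$ is the value of $i^*$ in the last iteration of Algorithm 1 in which $y_i$ is updated (i.e. the last iteration with $i_L<i<i^*$); if $y_i$ is never updated, $b(i)=n+1$. *)

(* Defs.v *)
From HB Require Import structures.
From mathcomp Require Import all_boot all_order all_algebra.
Set Implicit Arguments. Unset Strict Implicit. Unset Printing Implicit Defensive.
Import Order.TTheory GRing.Theory Num.Theory.
Local Open Scope ring_scope.

Definition zsum (R : realFieldType) (z : nat -> R) (i j : nat) : R :=
  \sum_(i <= k < j) z k.

Definition avg (R : realFieldType) (z : nat -> R) (i j : nat) : R :=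
  zsum z i j / (j - i)%:R.

(* State of the algorithm: the set S, the y_i, the x_i, the budget B^,
   and a trace recording, for each performed iteration, the pair (i*, i_L). *)
Record alg_state (R : realFieldType) := AlgState {
  st_S : seq nat;
  st_y : nat -> R;
  st_x : nat -> R;
  st_B : R;
  st_trace : seq (nat * nat)
}.

(* One iteration of the while loop (identity if the loop guard fails).
   [upd] = true: Algorithm 1 (y_i updated); [upd] = false: y never updated. *)
Definition alg_step (R : realFieldType) (upd : bool) (n : nat)
    (q z : nat -> R) (s : alg_state R) : alg_state R :=
  let S := st_S s in
  let y := st_y s in
  let x := st_x s in
  let B := st_B s in
  let cand := [seq i <- iota 1 n | i \notin S] in
  if (0 < B) && (cand != [::]) then
    (* smallest index among the minimisers of y over {1..n} \ S *)
    let istar := nth 0%N [seq i <- cand | all (fun j => y i <= y j) cand] 0 in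
    let iL := last 0%N [seq j <- iota 0 istar | j \in S] in
    let iR := head n.+1 [seq j <- iota istar.+1 (n.+1 - istar) | j \in S] in
    let d := Num.min (B / ((iR - istar)%:R * y istar)) (q istar - x istar) in
    AlgState (istar :: S)
      (if upd then (fun i => if (iL < i < istar)%N then avg z i istar else y i)
       else y)
      (fun i => if (istar <= i < iR)%N then x i + d else x i)
      (B - d * (iR - istar)%:R * y istar)
      (rcons (st_trace s) (istar, iL))
  else s.

(* Each iteration adds a new element of {1..n} to S, so the loop performs at
   most n iterations; running n steps (idle once the guard fails) is
   exactly the while loop. *)
Definition alg_run (R : realFieldType) (upd : bool) (n : nat)
    (q z : nat -> R) (K : R) (y0 : nat -> R) : alg_state R :=
  iter n (alg_step upd n q z)
    (AlgState [:: 0%N; n.+1] y0 (fun _ => 0) K [::]).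

Definition alg1 (R : realFieldType) (n : nat) (q z : nat -> R) (K : R) :=
  alg_run true n q z K (fun i => avg z i n.+1).

Definition alg1_output (R : realFieldType) (n : nat) (q z : nat -> R) (K : R)
  : nat -> R := st_x (alg1 n q z K).

Definition blocker (R : realFieldType) (n : nat) (q z : nat -> R) (K : R)
    (i : nat) : nat :=
  last n.+1 [seq p.1 | p <- st_trace (alg1 n q z K) & (p.2 < i < p.1)%N].

Definition modified_output (R : realFieldType) (n : nat) (q z : nat -> R) (K : R)
  : nat -> R :=
  st_x (alg_run false n q z K (fun i => avg z i (blocker n q z K i))).

(* Main.v *)
Require Import Defs.
From HB Require Import structures.
From mathcomp Require Import all_boot all_order all_algebra.
From mathcomp Require Import zify ring lra.
Set Implicit Arguments. Unset Strict Implicit. Unset Printing Implicit Defensive.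
Import Order.TTheory GRing.Theory Num.Theory.
Local Open Scope ring_scope.

Lemma last_filter_iota (P : pred nat) m : P 0%N -> 
  let l := last 0%N [seq j <- iota 0 m.+1 | P j] in
  [/\ P l, (l < m.+1)%N & forall j, P j -> (j < m.+1)%N -> (j <= l)%N].
Proof.
move=> P0; elim: m => [|m IH]; first by rewrite /= P0 /=; split=> // j _; case: j.
have -> : iota 0 m.+2 = iota 0 m.+1 ++ [:: m.+1] by rewrite -addn1 iotaD.
move: IH; rewrite filter_cat; move: (iota 0 m.+1) => t /=.
case Pm: (P m.+1) => /=; rewrite ?cats0 ?last_cat /=.
  move=> _; split=> // j _; by rewrite ltnS.
case=> [H1 H2 H3]; split=> //; first lia.
move=> j Pj; rewrite ltnS leq_eqVlt => /orP [/eqP Ej|Hj]; first by rewrite Ej Pm in Pj.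
exact: H3.
Qed.

Lemma head_filter_iota (P : pred nat) D len a : P (a + len.+1)%N ->
  let h := head D [seq j <- iota a.+1 len.+1 | P j] in
  [/\ P h, (a < h)%N, (h <= a + len.+1)%N & forall j, (a < j < h)%N -> ~~ P j].
Proof.
elim: len a => [|len IH] a.
  rewrite addn1 => Ha /=; rewrite Ha /=; split=> //; try lia; move=> j; lia.
have -> : iota a.+1 len.+2 = a.+1 :: iota a.+2 len.+1 by [].
move: (IH a.+1); move: (iota a.+2 len.+1) => t IHt /=.
case Pa: (P a.+1) => /= Hl.
  split=> //; [lia|move=> j; lia].
have := IHt; rewrite addSnnS => /(_ Hl) [H1 H2 H3 H4]; split=> //; first lia.
move=> j /andP [Hj1 Hj2]; case: (ltngtP j a.+1) => Hj; [lia| |by rewrite Hj Pa].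
by apply: H4; rewrite Hj Hj2.
Qed.

Lemma exists_min (R : realFieldType) (y : nat -> R) (c : seq nat) : c != [::] ->
  exists2 i, i \in c & forall j, j \in c -> y i <= y j.
Proof.
elim: c => // a c IH _; case: (eqVneq c [::]) => [->|/IH [i Hi Hm]].
  by exists a => [|j]; rewrite ?inE // => /eqP ->.
case: (leP (y a) (y i)) => H.
  exists a; first by rewrite inE eqxx.
  move=> j; rewrite inE => /orP [/eqP ->//|/Hm]; exact: le_trans.
exists i; first by rewrite inE Hi orbT.
move=> j; rewrite inE => /orP [/eqP ->|/Hm//]; exact: ltW.
Qed.

Lemma first_filter_transfer (P Q : pred nat) (c : seq nat) :
  (forall i, i \in c -> Q i -> P i) ->
  has P c -> Q (nth 0%N [seq i <- c | P i] 0) ->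
  nth 0%N [seq i <- c | Q i] 0 = nth 0%N [seq i <- c | P i] 0.
Proof.
elim: c => //= a c IH HQP.
case Pa: (P a) => /=.
  by move=> _ ->.
case Qa: (Q a); first by rewrite (HQP a (mem_head _ _) Qa) in Pa.
move=> Hh HQ; apply: IH => // i Hi; apply: HQP; by rewrite inE Hi orbT.
Qed.

Lemma before_first (Q : pred nat) (c : seq nat) i :
  sorted ltn c -> i \in c -> (i < nth 0%N [seq j <- c | Q j] 0)%N -> has Q c -> ~~ Q i.
Proof.
elim: c => //= a c IH Hs; rewrite inE => /orP [/eqP ->|Hi].
  by case Qa: (Q a) => //=; rewrite ltnn.
have Hc: sorted ltn c := path_sorted Hs.
have Hall := order_path_min ltn_trans Hs.
case Qa: (Q a) => /=.
  by move=> Hlt; move/allP: Hall => /(_ _ Hi) /=; lia.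
by move=> Hlt Hh; apply: IH.
Qed.

Lemma lt_div_cross (R : realFieldType) (a b x y : R) : 0 < a -> 0 < b ->
  (x / a < y / b) = (x * b < y * a).
Proof. by move=> Ha Hb; rewrite ltr_pdivlMr // mulrAC ltr_pdivrMr. Qed.

Lemma avg_mono (R : realFieldType) (z : nat -> R) i a b : (i < a < b)%N ->
  avg z a b < avg z i b -> avg z i b < avg z i a.
Proof.
move=> /andP [Hia Hab].
have E : zsum z i b = zsum z i a + zsum z a b by rewrite /zsum (big_cat_nat _ (n:=a)) //=; lia.
rewrite /avg E /zsum.
set A := \sum_(i <= k < a) z k; set B := \sum_(a <= k < b) z k.
have -> : (b - i)%N = ((a - i) + (b - a))%N by lia.
rewrite natrD.
have Hp : 0 < ((a - i)%N%:R : R) by rewrite ltr0n subn_gt0.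
have Hq : 0 < ((b - a)%N%:R : R) by rewrite ltr0n subn_gt0.
move: Hp Hq; set p := ((a - i)%N%:R : R); set q := ((b - a)%N%:R : R) => Hp Hq.
rewrite !lt_div_cross ?addr_gt0 // => H.
nra.
Qed.

Definition cand (n : nat) (S : seq nat) := [seq i <- iota 1 n | i \notin S].
Definition istar_of (R : realFieldType) n S (y : nat -> R) :=
  nth 0%N [seq i <- cand n S | all (fun j => y i <= y j) (cand n S)] 0.
Definition iL_of (S : seq nat) istar := last 0%N [seq j <- iota 0 istar | j \in S].
Definition iR_of n (S : seq nat) istar :=
  head n.+1 [seq j <- iota istar.+1 (n.+1 - istar) | j \in S].

Lemma alg_step_eq (R : realFieldType) upd n (q z : nat -> R) s :
  alg_step upd n q z s =
  if (0 < st_B s) && (cand n (st_S s) != [::]) then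
    let istar := istar_of n (st_S s) (st_y s) in
    let iL := iL_of (st_S s) istar in
    let iR := iR_of n (st_S s) istar in
    let d := Num.min (st_B s / ((iR - istar)%:R * st_y s istar)) (q istar - st_x s istar) in
    AlgState (istar :: st_S s)
      (if upd then (fun i => if (iL < i < istar)%N then avg z i istar else st_y s i)
       else st_y s)
      (fun i => if (istar <= i < iR)%N then st_x s i + d else st_x s i)
      (st_B s - d * (iR - istar)%:R * st_y s istar)
      (rcons (st_trace s) (istar, iL))
  else s.
Proof. by []. Qed.

Definition noS (S : seq nat) a b := forall m, (a < m < b)%N -> m \notin S.

Definition Inv (R : realFieldType) n (z : nat -> R) (s : alg_state R) :=
  [/\ 0%N \in st_S s, n.+1 \in st_S s &
   forall i, (1 <= i <= n)%N -> i \notin st_S s ->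
     exists k, [/\ (i < k)%N, k \in st_S s, noS (st_S s) i k & st_y s i = avg z i k]].

Lemma mem_cand n S i : (i \in cand n S) = [&& (1 <= i <= n)%N & i \notin S].
Proof. rewrite /cand mem_filter mem_iota andbC; congr (_ && _); apply/idP/idP; lia. Qed.

Lemma step_facts (R : realFieldType) n (z : nat -> R) s :
  Inv n z s -> cand n (st_S s) != [::] ->
  let S := st_S s in let y := st_y s in
  let ist := istar_of n S y in let iL := iL_of S ist in let iR := iR_of n S ist in
  [/\ ist \in cand n S,
      [/\ iL \in S, (iL < ist)%N, noS S iL ist & forall m, m \in S -> (m < ist)%N -> (m <= iL)%N],
      [/\ iR \in S, (ist < iR)%N & noS S ist iR],
      forall j, j \in cand n S -> y ist <= y j &
      forall j, j \in cand n S -> (j < ist)%N -> y ist < y j].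
Proof.
case=> H0 Hn1 HI Hc S y.
set c := cand n S.
set P := fun i => all (fun j => y i <= y j) c.
have hasP : has P c.
  case: (exists_min y Hc) => i Hi Hm; apply/hasP; exists i => //; apply/allP => j; exact: Hm.
have Hf : (0 < size [seq i <- c | P i])%N by rewrite size_filter -has_count.
have Hmem := mem_nth 0%N Hf; rewrite mem_filter in Hmem; case/andP: Hmem => Pis Hisc.
move=> ist iL iR.
have Eist : nth 0%N [seq i <- c | P i] 0 = ist by [].
rewrite Eist in Pis Hisc.
have Hmin : forall j, j \in c -> y ist <= y j by move=> j Hj; move/allP: Pis => /(_ j Hj).
have : [&& (1 <= ist <= n)%N & ist \notin S] by rewrite -mem_cand.
move=> /andP [His12 HisS]; move: His12 => /andP [His1 His2].
split; first exact: Hisc.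
- have := @last_filter_iota (fun j => j \in S) ist.-1 H0.
  rewrite (prednK His1) /=; case=> H1 H2 H3; split=> //.
  + move=> m /andP [Hm1 Hm2]; apply/negP => Hm; have := H3 m Hm Hm2; move: Hm1; rewrite /iL /iL_of; move=> a b; move: (leq_trans a b); by rewrite ltnn.
- have Hl : (ist + (n - ist).+1)%N = n.+1 by lia.
  have := @head_filter_iota (fun j => j \in S) n.+1 (n - ist)%N ist.
  rewrite Hl /= => /(_ Hn1) [H1 H2 H3 H4].
  have Hr : (n.+1 - ist)%N = (n - ist).+1 by lia.
  rewrite /iR /iR_of Hr; split=> // m Hm; exact: H4.
- exact: Hmin.
- move=> j Hj Hlt.
  have := before_first (Q := P) _ Hj Hlt hasP.
  have Hs : sorted ltn c by apply: sorted_filter; [exact: ltn_trans| exact: iota_ltn_sorted].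
  move=> /(_ Hs) /allPn [k Hk]; rewrite -ltNge => Hkj.
  exact: le_lt_trans (Hmin k Hk) Hkj.
Qed.

Lemma next_uniq (S : seq nat) a k1 k2 : (a < k1)%N -> (a < k2)%N -> k1 \in S -> k2 \in S ->
  noS S a k1 -> noS S a k2 -> k1 = k2.
Proof.
move=> h1 h2 m1 m2 n1 n2; case: (ltngtP k1 k2) => // H.
  by move: (n2 k1); rewrite h1 H m1 => /(_ isT).
by move: (n1 k2); rewrite h2 H m2 => /(_ isT).
Qed.

Lemma step_true_props (R : realFieldType) n (q z : nat -> R) s :
  Inv n z s ->
  let s' := alg_step true n q z s in
  [/\ Inv n z s', forall i, st_y s i <= st_y s' i,
      forall i, i \in st_S s -> i \in st_S s' &
      forall i, i \in st_S s' -> st_y s' i = st_y s i].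
Proof.
move=> HI s'; rewrite /s' alg_step_eq.
case: ifP => [/andP [HB Hc]|_]; last by split.
cbv zeta; have F := step_facts HI Hc; cbv zeta in F; case: HI => H0 Hn1 HI; move: F H0 Hn1 HI; clear HB Hc.
move: (st_S s) (st_y s) => S y.
move: (istar_of n S y) => ist.
move: (iL_of S ist) (iR_of n S ist) => iL iR.
case=> Hisc [L1 L2 L3 L4] [R1 R2 R3] Hmin Hlt H0 Hn1 HI.
have : [&& (1 <= ist <= n)%N & ist \notin S] by rewrite -mem_cand.
move=> /andP [/andP [His1 His2] HisS].
have HyiR : forall i, (iL < i <= ist)%N -> y i = avg z i iR.
  move=> i /andP [Hi1 Hi2].
  have HiS : i \notin S.
    case: (ltngtP i ist) Hi2 => // [Hii _|-> _]; last exact: HisS.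
    by apply: L3; rewrite Hi1 Hii.
  have [k [k1 k2 k3 k4]] := HI i (ltac:(lia)) HiS.
  suff E : k = iR by rewrite k4 E.
  apply: (next_uniq k1 _ k2 R1 k3); first lia.
  move=> m /andP [m1 m2]; case: (ltngtP m ist) => Hm.
  - by apply: L3; rewrite Hm andbT; lia.
  - by apply: R3; rewrite Hm m2.
  - by rewrite Hm.
split.
- split; [by rewrite /= inE H0 orbT | by rewrite /= inE Hn1 orbT |].
  move=> i Hi /=; rewrite inE negb_or => /andP [Hne HiS].
  case: ifP => [/andP [Hi1 Hi2]|Hnot].
    exists ist; split; rewrite ?inE ?eqxx //.
    move=> m /andP [m1 m2]; rewrite inE negb_or; apply/andP; split.
      by rewrite neq_ltn m2.
    by apply: L3; rewrite m2 andbT; lia.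
  have [k [k1 k2 k3 k4]] := HI i Hi HiS.
  exists k; split; rewrite ?inE ?k2 ?orbT //.
  move=> m /andP [m1 m2]; rewrite inE negb_or k3 ?m1 ?m2 // andbT.
  apply/negP => /eqP Em; subst m.
  have HiL : (i <= iL)%N by move: Hnot; rewrite m1 andbT => /negbT; rewrite -leqNgt.
  have Hne' : iL != i by apply/negP => /eqP E; rewrite -E L1 in HiS.
  have H := k3 iL; rewrite L1 in H; suff : false by []; apply: H.
  rewrite (leq_trans L2 (ltnW m2)) andbT ltn_neqAle HiL andbT eq_sym //.
- move=> i /=; case: ifP => [/andP [Hi1 Hi2]|_]; last exact: lexx.
  have HiS : i \notin S by apply: L3; rewrite Hi1 Hi2.
  have Hic : i \in cand n S by rewrite mem_cand HiS andbT; lia.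
  have := Hlt i Hic Hi2.
  rewrite (HyiR i) ?Hi1 ?(ltnW Hi2) // (HyiR ist) ?L2 ?leqnn // => H.
  apply: ltW; apply: avg_mono H; lia.
- by move=> i Hi; rewrite inE Hi orbT.
- move=> i; rewrite inE => /orP [/eqP ->|Hi]; first by rewrite /= ltnn andbF.
  rewrite /=; case: ifP => // /andP [Hi1 Hi2].
  have := L4 i Hi Hi2; lia.
Qed.

Lemma step_sim (R : realFieldType) n (q z : nat -> R) s m :
  Inv n z s -> st_S m = st_S s -> st_x m = st_x s -> st_B m = st_B s ->
  (forall i, st_y s i <= st_y m i) ->
  (forall i, i \in st_S (alg_step true n q z s) -> st_y m i = st_y s i) ->
  let sP := alg_step true n q z s in let mP := alg_step false n q z m in
  [/\ st_S mP = st_S sP, st_x mP = st_x sP, st_B mP = st_B sP & st_y mP = st_y m].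
Proof.
move=> HI ES EX EB Hle Heq sP mP; rewrite /sP /mP in Heq *.
rewrite !alg_step_eq ES EX EB in Heq *.
move: Heq; case: ifP => [/andP [HB Hc]|_] Heq; last by [].
cbv zeta in Heq |- *.
have F := step_facts HI Hc; cbv zeta in F.
case: F => Hisc _ _ Hmin _.
set ist := istar_of n (st_S s) (st_y s) in Heq Hisc Hmin *.
have Eist : st_y m ist = st_y s ist by apply: Heq; rewrite /= inE eqxx.
have -> : istar_of n (st_S s) (st_y m) = ist.
  rewrite /istar_of; apply: first_filter_transfer.
  - move=> i Hi /allP Hq; apply/allP => j Hj.
    apply: le_trans (Hle i) _; apply: le_trans (Hq _ Hisc) _.
    by rewrite Eist; apply: Hmin.
  - have Hc' := Hc; case: (exists_min (st_y s) Hc') => i Hi Hm.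
    by apply/hasP; exists i => //; apply/allP.
  - rewrite -/(istar_of n (st_S s) (st_y s)) -/ist; apply/allP => j Hj.
    by rewrite Eist; apply: le_trans (Hmin j Hj) (Hle j).
by rewrite Eist.
Qed.

Lemma step_trace (R : realFieldType) n (q z : nat -> R) s :
  (forall i, st_y s i = avg z i (last n.+1 [seq p.1 | p <- st_trace s & (p.2 < i < p.1)%N])) ->
  let s' := alg_step true n q z s in
  (forall i, st_y s' i = avg z i (last n.+1 [seq p.1 | p <- st_trace s' & (p.2 < i < p.1)%N])).
Proof.
move=> H s' i; rewrite /s' alg_step_eq; case: ifP => // _ /=.
rewrite filter_rcons /=; case: ifP => _; first by rewrite map_rcons last_rcons.
exact: H.
Qed.

Definition init1 (R : realFieldType) n (z : nat -> R) (K : R) :=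
  AlgState [:: 0%N; n.+1] (fun i => avg z i n.+1) (fun _ => 0) K [::].

Lemma Inv_init (R : realFieldType) n (z : nat -> R) K : Inv n z (init1 n z K).
Proof.
split; rewrite /= ?inE ?eqxx ?orbT //.
move=> i Hi _; exists n.+1; split; rewrite ?inE ?eqxx ?orbT //; first lia.
move=> m Hm; rewrite !inE negb_or; apply/andP; split; apply/eqP; lia.
Qed.

Lemma Inv_iter (R : realFieldType) n (q z : nat -> R) K t :
  Inv n z (iter t (alg_step true n q z) (init1 n z K)).
Proof.
elim: t => [|t IH]; first exact: Inv_init.
by rewrite iterS; case: (@step_true_props R n q z _ IH).
Qed.

Lemma mono_iter (R : realFieldType) n (q z : nat -> R) K t d i :
  st_y (iter t (alg_step true n q z) (init1 n z K)) i <=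
  st_y (iter (d + t) (alg_step true n q z) (init1 n z K)) i.
Proof.
elim: d => [|d IH]; first exact: lexx.
apply: le_trans IH _; rewrite addSn iterS.
by case: (@step_true_props R n q z _ (@Inv_iter R n q z K (d + t))).
Qed.

Lemma stable_iter (R : realFieldType) n (q z : nat -> R) K t d i :
  i \in st_S (iter t (alg_step true n q z) (init1 n z K)) ->
  i \in st_S (iter (d + t) (alg_step true n q z) (init1 n z K)) /\
  st_y (iter (d + t) (alg_step true n q z) (init1 n z K)) i =
  st_y (iter t (alg_step true n q z) (init1 n z K)) i.
Proof.
move=> Hi; elim: d => [|d [IH1 IH2]]; first by [].
rewrite addSn iterS.
case: (@step_true_props R n q z _ (@Inv_iter R n q z K (d + t))) => _ _ H3 H4.
have Hi' := H3 _ IH1; split => //; by rewrite H4.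
Qed.

Lemma trace_iter (R : realFieldType) n (q z : nat -> R) K t i :
  let s := iter t (alg_step true n q z) (init1 n z K) in
  st_y s i = avg z i (last n.+1 [seq p.1 | p <- st_trace s & (p.2 < i < p.1)%N]).
Proof.
elim: t i => [|t IH] i; first by [].
rewrite /= -/(iter t _ _); exact: step_trace.
Qed.

Unset Implicit Arguments.

Theorem lemma6 (R : realFieldType) (n : nat) (q z : nat -> R) (K : R) :
  (1 <= n)%N ->
  0 < q 1%N ->
  (forall i, (1 <= i < n)%N -> q i <= q i.+1) ->
  (forall i, (1 <= i <= n)%N -> 0 < z i) ->
  0 < K ->
  forall i, (1 <= i <= n)%N -> modified_output n q z K i = alg1_output n q z K i.
Proof.
move=> _ _ _ _ _ i _.
set sT := fun t => iter t (alg_step true n q z) (init1 n z K).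
set yf := fun i => avg z i (blocker n q z K i).
set init2 := AlgState [:: 0%N; n.+1] yf (fun _ => 0) K [::].
set mT := fun t => iter t (alg_step false n q z) init2.
change (st_x (mT n) i = st_x (sT n) i).
have Hyf : forall j, yf j = st_y (sT n) j.
  move=> j; rewrite /yf /blocker; symmetry; exact: (@trace_iter R n q z K n j).
suff : forall t, (t <= n)%N ->
  [/\ st_S (mT t) = st_S (sT t), st_x (mT t) = st_x (sT t), st_B (mT t) = st_B (sT t)
    & st_y (mT t) = yf].
  by move=> /(_ n (leqnn n)) [_ -> _ _].
elim=> [|t IH] Ht; first by [].
case: (IH (ltnW Ht)) => ES EX EB EY.
have := @step_sim R n q z (sT t) (mT t) (@Inv_iter R n q z K t) ES EX EB.
rewrite EY.
have Hle : forall j, st_y (sT t) j <= yf j.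
  move=> j; rewrite Hyf; have := @mono_iter R n q z K t (n - t) j; by rewrite subnK // ltnW.
have Heq : forall j, j \in st_S (alg_step true n q z (sT t)) -> yf j = st_y (sT t) j.
  move=> j Hj; rewrite Hyf.
  have := @stable_iter R n q z K t.+1 (n - t.+1) j Hj; rewrite subnK // => -[_ ->].
  by case: (@step_true_props R n q z _ (@Inv_iter R n q z K t)) => _ _ _ /(_ j Hj).
move=> /(_ Hle Heq) /= [E1 E2 E3 E4].
by rewrite /mT /sT /= -/(mT t) E1 E2 E3 E4.
Qed.
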